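(* Let $\rho$ be a 2-qubit pure state whose Bloch representation has the form $\boldsymbol{\alpha}=O_1(\mu,0,0)^T$, $\boldsymbol{\beta}=O_2(\mu,0,0)^T$, $C=O_1\,\mathrm{diag}(1,\sin\theta,-\sin\theta)\,O_2^T$, with $\theta\in[0,\pi/2]$, $\mu=\cos\theta$, $O_1,O_2\in SO(3)$, and suppose $|\mu|=1$. Then $I_{\chi^2,post}(\rho)=2$.
   Context: Let $\sigma_1,\sigma_2,\sigma_3$ be the Pauli matrices. For a 2-qubit density matrix $\rho$ its Bloch vector is $(b_1,\dots,b_{16})$, where $b_1=1$; $(b_2,b_3,b_4)=\boldsymbol{\alpha}$ with $\alpha_j=\operatorname{tr}((\sigma_j\otimes I)\rho)$; $(b_5,b_6,b_7)=\boldsymbol{\beta}$ with $\beta_j=\operatorname{tr}((I\otimes\sigma_j)\rho)$; and $(b_8,\dots,b_{16})$ are the entries $C_{jk}=\operatorname{tr}((\sigma_j\otimes\sigma_k)\rho)$ of the $3\times3$ matrix $C$ in row-major order. Every 2-qubit pure state has a Bloch representation of the displayed form. For $b\in[-1,1]$ and $h\in(-1,1)$, $D_{\chi^2}(b,h)=\frac{((b+1)/2)^2}{(h+1)/2}+\frac{((1-b)/2)^2}{(1-h)/2}-1$; if $h=\pm1$ and $b=h$, set $D_{\chi^2}(b,h)=0$. The posterior information content of a pure state with Bloch vector $(b_1,\dots,b_{16})$ is defined as follows. For $i=2,\dots,16$, let $b_i^{max}$ and $b_i^{min}$ be the maximum and the minimum of the $i$-th Bloch component over all 2-qubit pure states whose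 components $1,\dots,i-1$ equal $b_1,\dots,b_{i-1}$, and let $h_i=(b_i^{max}+b_i^{min})/2$. Then $I_{\chi^2,post}=\sum_{i=2}^{16}D_{\chi^2}(b_i,h_i)$. *)

(* Defs.v *)
From HB Require Import structures.
From mathcomp Require Import all_boot all_order all_algebra.
From mathcomp Require Import complex mxtens.
From mathcomp Require Import classical_sets reals trigo.
Set Implicit Arguments. Unset Strict Implicit. Unset Printing Implicit Defensive.
Import Order.TTheory GRing.Theory Num.Theory.
Local Open Scope ring_scope.
Local Open Scope complex_scope.

Section Bloch.
Variable R : realType.

Definition pauli (a : nat) : 'M[R[i]]_2 :=
  \matrix_(r < 2, c < 2)
   match a with
   | 0 => if r == c then 1 else 0
   | 1 => if r == c then 0 else 1
   | 2 => if r == c then 0 else (if (r : nat) == 0%N then - 'i else 'i)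
   | _ => if r == c then (if (r : nat) == 0%N then 1 else -1) else 0
   end.

(* Index pairs (a,b) of the operator sigma_a (x) sigma_b (sigma_0 = I)
   attached to the Bloch component b_i, i = 1..16 (paper's numbering). *)
Definition bloch_pair (i : nat) : nat * nat :=
  if i == 1%N then (0%N, 0%N)
  else if (i <= 4)%N then ((i - 1)%N, 0%N)
  else if (i <= 7)%N then (0%N, (i - 4)%N)
  else (((i - 8) %/ 3).+1, ((i - 8) %% 3).+1).

Definition bloch_op (i : nat) : 'M[R[i]]_(2 * 2) :=
  pauli (bloch_pair i).1 *t pauli (bloch_pair i).2.

Definition density (psi : 'cV[R[i]]_(2 * 2)) : 'M[R[i]]_(2 * 2) :=
  psi *m (map_mx conjc psi)^T.

Definition unit_vector (psi : 'cV[R[i]]_(2 * 2)) : Prop :=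
  \sum_(k < 2 * 2) (psi k 0)^* * psi k 0 = 1.

Definition pure2 (rho : 'M[R[i]]_(2 * 2)) : Prop :=
  exists psi, unit_vector psi /\ rho = density psi.

Definition bloch (rho : 'M[R[i]]_(2 * 2)) (i : nat) : R :=
  complex.Re (\tr (bloch_op i *m rho)).

Definition bl_alpha rho : 'cV[R]_3 := \col_(j < 3) bloch rho (j + 2)%N.
Definition bl_beta rho : 'cV[R]_3 := \col_(j < 3) bloch rho (j + 5)%N.
Definition bl_C rho : 'M[R]_3 :=
  \matrix_(j < 3, k < 3) bloch rho (8 + 3 * j + k)%N.

Definition fiber (rho : 'M[R[i]]_(2 * 2)) (i : nat) : set R :=
  [set x | exists rho', pure2 rho' /\
     (forall j, (1 <= j < i)%N -> bloch rho' j = bloch rho j) /\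
     x = bloch rho' i].

Definition bmax rho i : R := sup (fiber rho i).
Definition bmin rho i : R := inf (fiber rho i).
Definition hmid rho i : R := (bmax rho i + bmin rho i) / 2.

Definition Dchi2 (b h : R) : R :=
  if (h == 1) || (h == -1) then 0
  else ((b + 1) / 2) ^+ 2 / ((h + 1) / 2) + ((1 - b) / 2) ^+ 2 / ((1 - h) / 2) - 1.

Definition I_chi2_post (rho : 'M[R[i]]_(2 * 2)) : R :=
  \sum_(2 <= i < 17) Dchi2 (bloch rho i) (hmid rho i).

Definition SO3 (O : 'M[R]_3) : Prop := O^T *m O = 1%:M /\ \det O = 1.

End Bloch.

(* Main.v *)
Require Import Defs.
From HB Require Import structures.
From mathcomp Require Import all_boot all_order all_algebra.
From mathcomp Require Import complex mxtens.
From mathcomp Require Import classical_sets reals trigo.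
From mathcomp Require Import ring lra zify.
Import Order.TTheory GRing.Theory Num.Theory.
Local Open Scope ring_scope.

Lemma sum_tens (V : nmodType) (F : 'I_(2*2) -> V) :
  \sum_k F k = \sum_(i < 2) \sum_(j < 2) F (mxtens_index (i, j)).
Proof.
rewrite pair_big /=.
rewrite (reindex (@mxtens_index 2 2)) /=.
 by apply: eq_bigr => -[].
exists (@mxtens_unindex 2 2) => x _; [exact: mxtens_indexK | exact: mxtens_unindexK].
Qed.

Definition zz (R : realType) (psi : 'cV[R[i]]_(2*2)) (a b : 'I_2) := psi (mxtens_index (a, b)) 0.

Arguments zz {R}.
Lemma bloch_sum (R : realType) (psi : 'cV[R[i]]_(2*2)) n :
  bloch (density psi) n = complex.Re (\sum_(i1 < 2) \sum_(j1 < 2) \sum_(k < 2) \sum_(l < 2)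
     pauli R (bloch_pair n).1 i1 k * pauli R (bloch_pair n).2 j1 l * (zz psi k l * (zz psi i1 j1)^*)%C).
Proof.
rewrite /bloch /bloch_op /density /mxtrace sum_tens.
congr complex.Re; apply: eq_bigr => i1 _; apply: eq_bigr => j1 _.
rewrite mxE sum_tens; apply: eq_bigr => k _; apply: eq_bigr => l _.
rewrite tensmxE !mxE big_ord1 !mxE /zz.
by [].
Qed.

Definition i0 := @ord0 1.
Definition i1 := @ord_max 1.
Lemma sum2 (V : nmodType) (F : 'I_2 -> V) : \sum_(i < 2) F i = F i0 + F i1.
Proof. by rewrite big_ord_recl big_ord1; congr (_ + F _); apply: val_inj. Qed.

Definition dt (R : realType) (u v : R[i]) : R := complex.Re u * complex.Re v + complex.Im u * complex.Im v.
Definition cr (R : realType) (u v : R[i]) : R := complex.Re u * complex.Im v - complex.Im u * complex.Re v.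
Definition nn (R : realType) (u : R[i]) : R := complex.Re u ^+ 2 + complex.Im u ^+ 2.

Arguments dt {R}. Arguments cr {R}. Arguments nn {R}.
Definition blochF (R : realType) (p q r s : R[i]) (n : nat) : R :=
  match n with
  | 1 => nn p + nn q + nn r + nn s
  | 2 => 2 * (dt p r + dt q s)
  | 3 => 2 * (cr p r + cr q s)
  | 4 => nn p + nn q - nn r - nn s
  | 5 => 2 * (dt p q + dt r s)
  | 6 => 2 * (cr p q + cr r s)
  | 7 => nn p - nn q + nn r - nn s
  | 8 => 2 * (dt p s + dt q r)
  | 9 => 2 * (cr p s - cr q r)
  | 10 => 2 * (dt p r - dt q s)
  | 11 => 2 * (cr p s + cr q r)
  | 12 => 2 * (dt q r - dt p s)
  | 13 => 2 * (cr p r - cr q s)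
  | 14 => 2 * (dt p q - dt r s)
  | 15 => 2 * (cr p q - cr r s)
  | 16 => nn p - nn q - nn r + nn s
  | _ => 0
  end.

Arguments blochF {R}.
Lemma bloch_formula (R : realType) (psi : 'cV[R[i]]_(2*2)) n : (1 <= n <= 16)%N ->
  bloch (density psi) n = blochF (zz psi i0 i0) (zz psi i0 i1) (zz psi i1 i0) (zz psi i1 i1) n.
Proof.
move=> hn; rewrite bloch_sum !sum2.
move: (zz psi i0 i0) (zz psi i0 i1) (zz psi i1 i0) (zz psi i1 i1) => [a0 b0] [a1 b1] [a2 b2] [a3 b3].
case: n hn => [|[|[|[|[|[|[|[|[|[|[|[|[|[|[|[|[|n]]]]]]]]]]]]]]]]] hn //; rewrite /bloch_pair /= !mxE /= /dt /cr /nn /=; ring.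
Qed.

Definition Dd (R : realType) (p q r s : R[i]) : R :=
  (complex.Re p * complex.Re s - complex.Im p * complex.Im s - complex.Re q * complex.Re r + complex.Im q * complex.Im r)^+2
  + (complex.Re p * complex.Im s + complex.Im p * complex.Re s - complex.Re q * complex.Im r - complex.Im q * complex.Re r)^+2.
Arguments Dd {R}.

Lemma I1 (R : realType) (p q r s : R[i]) :
  blochF p q r s 1 ^+ 2 - (blochF p q r s 2 ^+ 2 + blochF p q r s 3 ^+ 2 + blochF p q r s 4 ^+ 2) = 4 * Dd p q r s.
Proof. rewrite /blochF /Dd /dt /cr /nn; ring. Qed.
Lemma I2 (R : realType) (p q r s : R[i]) :
  blochF p q r s 1 ^+ 2 - (blochF p q r s 5 ^+ 2 + blochF p q r s 6 ^+ 2 + blochF p q r s 7 ^+ 2) = 4 * Dd p q r s.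
Proof. rewrite /blochF /Dd /dt /cr /nn; ring. Qed.
Lemma I3 (R : realType) (p q r s : R[i]) :
   (blochF p q r s 1 * blochF p q r s 8 - blochF p q r s 2 * blochF p q r s 5)^+2 + (blochF p q r s 1 * blochF p q r s 9 - blochF p q r s 2 * blochF p q r s 6)^+2 + (blochF p q r s 1 * blochF p q r s 10 - blochF p q r s 2 * blochF p q r s 7)^+2
 + (blochF p q r s 1 * blochF p q r s 11 - blochF p q r s 3 * blochF p q r s 5)^+2 + (blochF p q r s 1 * blochF p q r s 12 - blochF p q r s 3 * blochF p q r s 6)^+2 + (blochF p q r s 1 * blochF p q r s 13 - blochF p q r s 3 * blochF p q r s 7)^+2
 + (blochF p q r s 1 * blochF p q r s 14 - blochF p q r s 4 * blochF p q r s 5)^+2 + (blochF p q r s 1 * blochF p q r s 15 - blochF p q r s 4 * blochF p q r s 6)^+2 + (blochF p q r s 1 * blochF p q r s 16 - blochF p q r s 4 * blochF p q r s 7)^+2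
 = 8 * Dd p q r s * blochF p q r s 1 ^+ 2 + 16 * Dd p q r s ^+ 2.
Proof. rewrite /blochF /= /Dd /dt /cr /nn; ring. Qed.
Lemma Dd_ge0 (R : realType) (p q r s : R[i]) : 0 <= Dd p q r s.
Proof. by rewrite /Dd addr_ge0 // sqr_ge0. Qed.

Lemma sq0 (R : realType) (x : R) : x ^+ 2 <= 0 -> x = 0.
Proof. by move=> h; apply/eqP; rewrite -sqrf_eq0 eq_le h sqr_ge0. Qed.

Lemma facts_poly (R : realType) (p q r s : R[i]) (F := blochF p q r s) :
  F 1 = 1 ->
  [/\ F 2 ^+ 2 + F 3 ^+ 2 + F 4 ^+ 2 <= 1,
      F 5 ^+ 2 + F 6 ^+ 2 + F 7 ^+ 2 = F 2 ^+ 2 + F 3 ^+ 2 + F 4 ^+ 2 &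
      F 2 ^+ 2 + F 3 ^+ 2 + F 4 ^+ 2 = 1 ->
      (F 8 = F 2 * F 5 /\ F 9 = F 2 * F 6 /\ F 10 = F 2 * F 7 /\
          F 11 = F 3 * F 5 /\ F 12 = F 3 * F 6 /\ F 13 = F 3 * F 7 /\
          F 14 = F 4 * F 5 /\ F 15 = F 4 * F 6 /\ F 16 = F 4 * F 7)].
Proof.
move=> h1.
have i1 := @I1 R p q r s; have i2 := @I2 R p q r s; have i3 := @I3 R p q r s.
rewrite -/F h1 expr1n in i1 i2 i3.
have hD := @Dd_ge0 R p q r s.
split; [lra | lra | move=> ha].
have D0 : Dd p q r s = 0 by lra.
rewrite D0 !mul1r mulr0 mul0r expr0n /= mulr0 addr0 in i3.
move: i3.
set t1 := (F 8 - _); set t2 := (F 9 - _); set t3 := (F 10 - _);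
set t4 := (F 11 - _); set t5 := (F 12 - _); set t6 := (F 13 - _);
set t7 := (F 14 - _); set t8 := (F 15 - _); set t9 := (F 16 - _) => i3.
have s1 := sqr_ge0 t1; have s2 := sqr_ge0 t2; have s3 := sqr_ge0 t3;
have s4 := sqr_ge0 t4; have s5 := sqr_ge0 t5; have s6 := sqr_ge0 t6;
have s7 := sqr_ge0 t7; have s8 := sqr_ge0 t8; have s9 := sqr_ge0 t9.
have e1 : t1 = 0 by apply: sq0; lra.
have e2 : t2 = 0 by apply: sq0; lra.
have e3 : t3 = 0 by apply: sq0; lra.
have e4 : t4 = 0 by apply: sq0; lra.
have e5 : t5 = 0 by apply: sq0; lra.
have e6 : t6 = 0 by apply: sq0; lra.
have e7 : t7 = 0 by apply: sq0; lra.
have e8 : t8 = 0 by apply: sq0; lra.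
have e9 : t9 = 0 by apply: sq0; lra.
by do !split; apply: subr0_eq; assumption.
Qed.

Lemma unit_N (R : realType) (p q r s : R[i]) :
  ((p^* * p + q^* * q) + (r^* * r + s^* * s) = 1)%C -> blochF p q r s 1 = 1.
Proof.
case: p q r s => [a0 b0] [a1 b1] [a2 b2] [a3 b3] /(congr1 (@complex.Re R)) /= h.
rewrite /blochF /nn /=; rewrite -[RHS]h; ring.
Qed.

Definition asum (R : realType) (rho : 'M[R[i]]_(2*2)) :=
  bloch rho 2 ^+ 2 + bloch rho 3 ^+ 2 + bloch rho 4 ^+ 2.
Definition bsum (R : realType) (rho : 'M[R[i]]_(2*2)) :=
  bloch rho 5 ^+ 2 + bloch rho 6 ^+ 2 + bloch rho 7 ^+ 2.
Arguments asum {R}. Arguments bsum {R}.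

Lemma pure_facts (R : realType) (rho : 'M[R[i]]_(2*2)) : pure2 rho ->
  [/\ bloch rho 1 = 1, asum rho <= 1, bsum rho = asum rho &
   asum rho = 1 -> forall n, (8 <= n <= 16)%N ->
     bloch rho n = bloch rho ((n - 8) %/ 3 + 2) * bloch rho ((n - 8) %% 3 + 5)].
Proof.
case=> psi [hu ->].
have h1 : blochF (zz psi i0 i0) (zz psi i0 i1) (zz psi i1 i0) (zz psi i1 i1) 1 = 1.
  apply: unit_N; move: hu; rewrite /unit_vector sum_tens !sum2; exact.
have [ha hb hc] := @facts_poly R _ _ _ _ h1.
rewrite /asum /bsum !bloch_formula //; split => //.
move=> /hc [c1 [c2 [c3 [c4 [c5 [c6 [c7 [c8 c9]]]]]]]] n hn.
move: hn; case: n => [|[|[|[|[|[|[|[|[|[|[|[|[|[|[|[|[|n]]]]]]]]]]]]]]]]] // _;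
  rewrite !bloch_formula //.
Qed.

Lemma qubit (R : realType) (x y z : R) : x ^+ 2 + y ^+ 2 + z ^+ 2 = 1 ->
  exists e0 e1 : R[i], [/\ nn e0 + nn e1 = 1, 2 * dt e0 e1 = x, 2 * cr e0 e1 = y & nn e0 - nn e1 = z].
Proof.
move=> h.
have [zm|zn] := eqVneq z (-1).
  have hx : x = 0 by apply: sq0; rewrite zm in h; nra.
  have hy : y = 0 by apply: sq0; rewrite zm in h; nra.
  exists 0%C, 1%C; rewrite /nn /dt /cr /= hx hy zm; split; ring.
have zp : 0 < 1 + z.
  have : -1 <= z by nra.
  rewrite le_eqVlt eq_sym (negbTE zn) /= => hz; lra.
set c := Num.sqrt ((1 + z) / 2).
have cpos : 0 < c by rewrite sqrtr_gt0; lra.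
have hc2 : c ^+ 2 = (1 + z) / 2 by rewrite sqr_sqrtr //; lra.
set k := (2 * c)^-1.
have h2ck : 2 * c * k = 1 by rewrite /k mulfV //; apply/eqP; lra.
have hk : (1 + z) * k ^+ 2 = 2^-1.
  have -> : 1 + z = 2 * c ^+ 2 by rewrite hc2; field.
  have -> : 2 * c ^+ 2 * k ^+ 2 = (2 * c * k) ^+ 2 / 2 by field.
  by rewrite h2ck expr1n mul1r.
have hxy : x ^+ 2 + y ^+ 2 = (1 - z) * (1 + z) by lra.
have E : (x * k) ^+ 2 + (y * k) ^+ 2 = (1 - z) / 2.
  have -> : (x * k) ^+ 2 + (y * k) ^+ 2 = (x ^+ 2 + y ^+ 2) * k ^+ 2 by ring.
  by rewrite hxy -mulrA hk; field.
clearbody k c. exists (Complex c 0), (Complex (x * k) (y * k)).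
rewrite /nn /dt /cr /=; split.
- have -> : c ^+ 2 + 0 ^+ 2 + ((x * k) ^+ 2 + (y * k) ^+ 2) = c ^+ 2 + ((x * k) ^+ 2 + (y * k) ^+ 2) by ring.
  by rewrite E hc2; field.
- have -> : 2 * (c * (x * k) + 0 * (y * k)) = (2 * c * k) * x by ring.
  by rewrite h2ck mul1r.
- have -> : 2 * (c * (y * k) - 0 * (x * k)) = (2 * c * k) * y by ring.
  by rewrite h2ck mul1r.
- have -> : c ^+ 2 + 0 ^+ 2 - ((x * k) ^+ 2 + (y * k) ^+ 2) = c ^+ 2 - ((x * k) ^+ 2 + (y * k) ^+ 2) by ring.
  by rewrite E hc2; field.
Qed.

Lemma prodF (R : realType) (e0 e1 f0 f1 : R[i]) :
  let G := blochF (e0 * f0)%C (e0 * f1)%C (e1 * f0)%C (e1 * f1)%C in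
  [/\ G 1 = (nn e0 + nn e1) * (nn f0 + nn f1),
      G 2 = 2 * dt e0 e1 * (nn f0 + nn f1),
      G 3 = 2 * cr e0 e1 * (nn f0 + nn f1),
      G 4 = (nn e0 - nn e1) * (nn f0 + nn f1) &
   [/\ G 5 = (nn e0 + nn e1) * (2 * dt f0 f1),
      G 6 = (nn e0 + nn e1) * (2 * cr f0 f1) &
      G 7 = (nn e0 + nn e1) * (nn f0 - nn f1)]].
Proof.
case: e0 e1 f0 f1 => [a0 b0] [a1 b1] [c0 d0] [c1 d1] /=.
rewrite /blochF /nn /dt /cr /=; split; try split; ring.
Qed.

Lemma product (R : realType) (u1 u2 u3 v1 v2 v3 : R) :
  u1 ^+ 2 + u2 ^+ 2 + u3 ^+ 2 = 1 -> v1 ^+ 2 + v2 ^+ 2 + v3 ^+ 2 = 1 ->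
  exists rho : 'M[R[i]]_(2*2), pure2 rho /\
   [/\ bloch rho 1 = 1, bloch rho 2 = u1, bloch rho 3 = u2, bloch rho 4 = u3 &
    [/\ bloch rho 5 = v1, bloch rho 6 = v2 & bloch rho 7 = v3]].
Proof.
move=> /qubit [e0 [e1 [he hu1 hu2 hu3]]] /qubit [f0 [f1 [hf hv1 hv2 hv3]]].
pose psi : 'cV[R[i]]_(2*2) := \col_(k < 2 * 2) [:: (e0 * f0)%C; (e0 * f1)%C; (e1 * f0)%C; (e1 * f1)%C]`_k.
have hz : [/\ zz psi i0 i0 = (e0 * f0)%C, zz psi i0 i1 = (e0 * f1)%C,
              zz psi i1 i0 = (e1 * f0)%C & zz psi i1 i1 = (e1 * f1)%C].
  by rewrite /zz !mxE.
case: hz => z00 z01 z10 z11.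
have [g1 g2 g3 g4 [g5 g6 g7]] := @prodF R e0 e1 f0 f1.
exists (density psi); split.
  exists psi; split => //.
  rewrite /unit_vector sum_tens !sum2.
  rewrite -/(zz psi i0 i0) -/(zz psi i0 i1) -/(zz psi i1 i0) -/(zz psi i1 i1) z00 z01 z10 z11.
  move: he hf; rewrite /nn.
  case: e0 e1 f0 f1 {g1 g2 g3 g4 g5 g6 g7 hu1 hu2 hu3 hv1 hv2 hv3 psi z00 z01 z10 z11}
     => [a0 b0] [a1 b1] [c0 d0] [c1 d1] /= he hf.
  apply/eqP; rewrite eq_complex /=; apply/andP; split; apply/eqP.
    rewrite -[RHS](mulr1 1) -{1}he -hf; ring.
  ring.
rewrite !bloch_formula // z00 z01 z10 z11 g1 g2 g3 g4 g5 g6 g7 he hf.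
rewrite hu1 hu2 hu3 hv1 hv2 hv3 !mul1r !mulr1; split => //.
Qed.

Section SupAux.
Local Open Scope classical_set_scope.
Lemma sup_inf_sym (R : realType) (E : set R) s :
  (forall x, E x -> -s <= x <= s) -> E s -> E (-s) -> sup E = s /\ inf E = -s.
Proof.
move=> hE hs hns.
have ne : E !=set0 by exists s.
split; apply/eqP; rewrite eq_le; apply/andP; split.
- by apply: ge_sup => // x /hE /andP[].
- apply: (ub_le_sup) => //; exists s => x /hE /andP[] //.
- apply: (ge_inf) => //; exists (-s) => x /hE /andP[] //.
- by apply: lb_le_inf => // x /hE /andP[].
Qed.

Lemma sup_inf_pt (R : realType) (E : set R) c :
  (forall x, E x -> x = c) -> E c -> sup E = c /\ inf E = c.
Proof.
move=> hE hc.
have -> : E = [set c] by apply/seteqP; split => x /=; [move/hE | move=> ->].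
by rewrite sup1 inf1.
Qed.

End SupAux.

Lemma Dchi2_0 (R : realType) (b : R) : Dchi2 b 0 = b ^+ 2.
Proof.
rewrite /Dchi2.
have -> : ((0 : R) == 1) = false by apply/eqP; lra.
have -> : ((0 : R) == -1) = false by apply/eqP; lra.
by rewrite /=; field.
Qed.

Lemma Dchi2_bb (R : realType) (b : R) : Dchi2 b b = 0.
Proof.
rewrite /Dchi2; case: ifP => // /norP [h1 h2].
have h1' : b + 1 != 0 by apply: contra h2; rewrite addr_eq0.
have h2' : 1 - b != 0 by rewrite subr_eq0 eq_sym.
by field; rewrite h1' h2'.
Qed.

Lemma hmid_sym (R : realType) (rho : 'M[R[i]]_(2*2)) n s : 0 <= s ->
  (forall rho', pure2 rho' -> (forall j, (1 <= j < n)%N -> bloch rho' j = bloch rho j) ->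
     bloch rho' n ^+ 2 <= s ^+ 2) ->
  (forall t, t ^+ 2 = s ^+ 2 -> exists rho', pure2 rho' /\
     (forall j, (1 <= j < n)%N -> bloch rho' j = bloch rho j) /\ bloch rho' n = t) ->
  hmid rho n = 0.
Proof.
move=> s0 hub hex.
have [E1 E2] : sup (fiber rho n) = s /\ inf (fiber rho n) = -s.
  apply: sup_inf_sym.
  - move=> x [r' [hp [ha ->]]]; have := hub r' hp ha => h.
    rewrite -ler_norml; rewrite -(ger0_norm s0); rewrite -ler_sqr ?real_normK ?num_real //.
  - have [r' [hp [ha e]]] := hex s erefl; by exists r'.
  - have [r' [hp [ha e]]] := hex (-s) (sqrrN s); by exists r'.
by rewrite /hmid /bmax /bmin E1 E2 subrr mul0r.
Qed.

Lemma hmid_pt (R : realType) (rho : 'M[R[i]]_(2*2)) n : pure2 rho ->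
  (forall rho', pure2 rho' -> (forall j, (1 <= j < n)%N -> bloch rho' j = bloch rho j) ->
     bloch rho' n = bloch rho n) ->
  hmid rho n = bloch rho n.
Proof.
move=> hp h.
have [E1 E2] : sup (fiber rho n) = bloch rho n /\ inf (fiber rho n) = bloch rho n.
  apply: sup_inf_pt.
  - by move=> x [r' [hp' [ha ->]]]; apply: h.
  - by exists rho.
by rewrite /hmid /bmax /bmin E1 E2; field.
Qed.

Lemma L_le1 {R : realFieldType} {x y z : R} : x^+2+y^+2+z^+2 <= 1 -> x^+2 <= 1^+2.
Proof. have := sqr_ge0 y; have := sqr_ge0 z; lra. Qed.
Lemma L_le2 {R : realFieldType} {x y z : R} : x^+2+y^+2+z^+2 <= 1 -> y^+2 <= 1 - x^+2.
Proof. have := sqr_ge0 z; lra. Qed.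
Lemma L_le3 {R : realFieldType} {x y z : R} : x^+2+y^+2+z^+2 <= 1 -> z^+2 <= 1 - x^+2 - y^+2.
Proof. lra. Qed.
Lemma L_pos2 {R : realFieldType} {x y z : R} : x^+2+y^+2+z^+2 = 1 -> 0 <= 1 - x^+2.
Proof. have := sqr_ge0 y; have := sqr_ge0 z; lra. Qed.
Lemma L_pos3 {R : realFieldType} {x y z : R} : x^+2+y^+2+z^+2 = 1 -> 0 <= 1 - x^+2 - y^+2.
Proof. have := sqr_ge0 z; lra. Qed.
Lemma L_ex1 {R : realFieldType} {t : R} : t^+2 = 1^+2 -> t^+2 + 0^+2 + 0^+2 = 1.
Proof. move=> h; rewrite h; ring. Qed.
Lemma L_ex2 {R : realFieldType} {a t : R} : t^+2 = 1 - a^+2 -> a^+2 + t^+2 + 0^+2 = 1.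
Proof. move=> h; rewrite h; ring. Qed.
Lemma L_ex3 {R : realFieldType} {a b t : R} : t^+2 = 1 - a^+2 - b^+2 -> a^+2 + b^+2 + t^+2 = 1.
Proof. move=> h; rewrite h; ring. Qed.
Lemma L_unit {R : realFieldType} : 1^+2 + 0^+2 + 0^+2 = 1 :> R.
Proof. ring. Qed.
Lemma L_fin {R : realFieldType} {x2 x3 x4 x5 x6 x7 : R} : x2^+2 + x3^+2 + x4^+2 = 1 -> x5^+2 + x6^+2 + x7^+2 = 1 ->
  x2^+2 + (x3^+2 + (x4^+2 + (x5^+2 + (x6^+2 + x7^+2)))) = 2.
Proof. lra. Qed.

Lemma L_le1' {R : realFieldType} {x y z : R} : x^+2+y^+2+z^+2 = 1 -> x^+2 <= 1^+2.
Proof. by move=> h; apply: (@L_le1 _ x y z); rewrite h. Qed.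
Lemma L_le2' {R : realFieldType} {x y z : R} : x^+2+y^+2+z^+2 = 1 -> y^+2 <= 1 - x^+2.
Proof. by move=> h; apply: (@L_le2 _ x y z); rewrite h. Qed.
Lemma L_le3' {R : realFieldType} {x y z : R} : x^+2+y^+2+z^+2 = 1 -> z^+2 <= 1 - x^+2 - y^+2.
Proof. by move=> h; apply: (@L_le3 _ x y z); rewrite h. Qed.

Theorem lemma4 (R : realType) (rho : 'M[R[i]]_(2 * 2)) (O1 O2 : 'M[R]_3)
    (theta : R) :
  pure2 rho -> SO3 O1 -> SO3 O2 ->
  0 <= theta <= pi / 2 ->
  bl_alpha rho = O1 *m (\col_(j < 3) [:: cos theta; 0; 0]`_j) ->
  bl_beta rho = O2 *m (\col_(j < 3) [:: cos theta; 0; 0]`_j) ->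
  bl_C rho = O1 *m diag_mx (\row_(j < 3) [:: 1; sin theta; - sin theta]`_j)
               *m O2^T ->
  `|cos theta| = 1 ->
  I_chi2_post rho = 2.
Proof.
move=> hp [hO1 _] _ _ ha _ _ hcos.
have hc2 : cos theta ^+ 2 = 1 by rewrite -real_normK ?num_real // hcos expr1n.
have hA : asum rho = 1.
  set w := \col_(j < 3) [:: cos theta; 0; 0]`_j.
  have : (bl_alpha rho)^T *m bl_alpha rho = w^T *m w.
    by rewrite ha trmx_mul mulmxA -(mulmxA w^T) hO1 mulmx1.
  move/(congr1 (fun M : 'M[R]_1 => M ord0 ord0)).
  rewrite !mxE !big_ord_recl big_ord0 !mxE.
  have -> : (bump 0 0 + 2 = 3)%N by [].
  have -> : (bump 0 (bump 0 0) + 2 = 4)%N by [].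
  have -> : (0 + 2 = 2)%N by [].
  rewrite big_ord0.
  rewrite (_ : [:: cos theta; 0; 0]`_(lift ord0 ord0) = 0) //.
  rewrite (_ : [:: cos theta; 0; 0]`_(lift ord0 (lift ord0 ord0)) = 0) //.
  rewrite (_ : [:: cos theta; 0; 0]`_ord0 = cos theta) //.
  rewrite /asum; move: (bloch rho 2) (bloch rho 3) (bloch rho 4) => x y z h.
  rewrite !mulr0 !addr0 in h; rewrite -hc2 !expr2 -addrA h; reflexivity.
have [hb1 haL hbs hCf] := @pure_facts _ _ hp.
rewrite hA in hbs.
have hpt : forall n, (8 <= n <= 16)%N -> hmid rho n = bloch rho n.
  move=> n hn; apply: hmid_pt; first exact: hp.
  move=> r' hp' ag.
  have [_ _ _ hC'] := @pure_facts _ _ hp'.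
  have ag' : forall j, (1 <= j <= 7)%N -> bloch r' j = bloch rho j.
    by move=> j hj; apply: ag; move: hj hn; lia.
  have hA' : asum r' = 1.
    rewrite /asum (ag' 2%N erefl) (ag' 3%N erefl) (ag' 4%N erefl); exact: hA.
  have i1 : (1 <= (n - 8) %/ 3 + 2 <= 7)%N by move: hn; lia.
  have i2 : (1 <= (n - 8) %% 3 + 5 <= 7)%N by move: hn; lia.
  rewrite (hC' hA' n hn) (hCf hA n hn) (ag' _ i1) (ag' _ i2); reflexivity.
have hA' : forall r', pure2 r' -> (forall j, (1 <= j < 5)%N -> bloch r' j = bloch rho j) -> asum r' = 1.
  move=> r' _ ag; rewrite /asum (ag 2%N erefl) (ag 3%N erefl) (ag 4%N erefl); exact: hA.
have hB : forall r', pure2 r' -> (forall j, (1 <= j < 5)%N -> bloch r' j = bloch rho j) -> bsum r' = 1.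
  move=> r' hp' ag; have [_ _ -> _] := @pure_facts _ _ hp'; exact: hA' hp' ag.
have h2 : hmid rho 2 = 0.
  apply: (@hmid_sym R rho 2 1); first exact: ler01.
  - move=> r' hp' _; have [_ ha' _ _] := @pure_facts _ _ hp'; exact: L_le1 ha'.
  - move=> t ht.
    have [r' [hp' [e1 e2 e3 e4 [e5 e6 e7]]]] := @product R t 0 0 1 0 0 (L_ex1 ht) L_unit.
    exists r'; split; first exact: hp'.
    split; last exact: e2.
    move=> j /andP[j1 jn]; case: j j1 jn => [|[|[|[|[|[|[|[|j]]]]]]]] j1 jn; try (by exfalso; move: j1 jn; lia);
      rewrite ?e1 ?hb1 ?e2 ?e3 ?e4 ?e5 ?e6 ?e7; reflexivity.
have h3 : hmid rho 3 = 0.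
  have s0 := L_pos2 hA.
  have hs := sqr_sqrtr s0.
  apply: (@hmid_sym R rho 3 (Num.sqrt (1 - bloch rho 2 ^+ 2))); first exact: sqrtr_ge0.
  - move=> r' hp' ag; have [_ ha' _ _] := @pure_facts _ _ hp'.
    rewrite hs -(ag 2%N erefl); exact: L_le2 ha'.
  - move=> t ht; rewrite hs in ht.
    have [r' [hp' [e1 e2 e3 e4 [e5 e6 e7]]]] := @product R (bloch rho 2) t 0 1 0 0 (L_ex2 ht) L_unit.
    exists r'; split; first exact: hp'.
    split; last exact: e3.
    move=> j /andP[j1 jn]; case: j j1 jn => [|[|[|[|[|[|[|[|j]]]]]]]] j1 jn; try (by exfalso; move: j1 jn; lia);
      rewrite ?e1 ?hb1 ?e2 ?e3 ?e4 ?e5 ?e6 ?e7; reflexivity.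
have h4 : hmid rho 4 = 0.
  have s0 := L_pos3 hA.
  have hs := sqr_sqrtr s0.
  apply: (@hmid_sym R rho 4 (Num.sqrt (1 - bloch rho 2 ^+ 2 - bloch rho 3 ^+ 2))); first exact: sqrtr_ge0.
  - move=> r' hp' ag; have [_ ha' _ _] := @pure_facts _ _ hp'.
    rewrite hs -(ag 2%N erefl) -(ag 3%N erefl); exact: L_le3 ha'.
  - move=> t ht; rewrite hs in ht.
    have [r' [hp' [e1 e2 e3 e4 [e5 e6 e7]]]] := @product R (bloch rho 2) (bloch rho 3) t 1 0 0 (L_ex3 ht) L_unit.
    exists r'; split; first exact: hp'.
    split; last exact: e4.
    move=> j /andP[j1 jn]; case: j j1 jn => [|[|[|[|[|[|[|[|j]]]]]]]] j1 jn; try (by exfalso; move: j1 jn; lia);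
      rewrite ?e1 ?hb1 ?e2 ?e3 ?e4 ?e5 ?e6 ?e7; reflexivity.
have h5 : hmid rho 5 = 0.
  apply: (@hmid_sym R rho 5 1); first exact: ler01.
  - move=> r' hp' ag; have := hB r' hp' ag => hb'.
    exact: L_le1' hb'.
  - move=> t ht.
    have [r' [hp' [e1 e2 e3 e4 [e5 e6 e7]]]] := @product R (bloch rho 2) (bloch rho 3) (bloch rho 4) t 0 0 hA (L_ex1 ht).
    exists r'; split; first exact: hp'.
    split; last exact: e5.
    move=> j /andP[j1 jn]; case: j j1 jn => [|[|[|[|[|[|[|[|j]]]]]]]] j1 jn; try (by exfalso; move: j1 jn; lia);
      rewrite ?e1 ?hb1 ?e2 ?e3 ?e4 ?e5 ?e6 ?e7; reflexivity.
have h6 : hmid rho 6 = 0.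
  have s0 := L_pos2 hbs.
  have hs := sqr_sqrtr s0.
  apply: (@hmid_sym R rho 6 (Num.sqrt (1 - bloch rho 5 ^+ 2))); first exact: sqrtr_ge0.
  - move=> r' hp' ag.
    have ag5 : forall j, (1 <= j < 5)%N -> bloch r' j = bloch rho j by move=> j hj; apply: ag; move: hj; lia.
    have := hB r' hp' ag5 => hb'.
    rewrite hs -(ag 5%N erefl); exact: L_le2' hb'.
  - move=> t ht; rewrite hs in ht.
    have [r' [hp' [e1 e2 e3 e4 [e5 e6 e7]]]] := @product R (bloch rho 2) (bloch rho 3) (bloch rho 4) (bloch rho 5) t 0 hA (L_ex2 ht).
    exists r'; split; first exact: hp'.
    split; last exact: e6.
    move=> j /andP[j1 jn]; case: j j1 jn => [|[|[|[|[|[|[|[|j]]]]]]]] j1 jn; try (by exfalso; move: j1 jn; lia);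
      rewrite ?e1 ?hb1 ?e2 ?e3 ?e4 ?e5 ?e6 ?e7; reflexivity.
have h7 : hmid rho 7 = 0.
  have s0 := L_pos3 hbs.
  have hs := sqr_sqrtr s0.
  apply: (@hmid_sym R rho 7 (Num.sqrt (1 - bloch rho 5 ^+ 2 - bloch rho 6 ^+ 2))); first exact: sqrtr_ge0.
  - move=> r' hp' ag.
    have ag5 : forall j, (1 <= j < 5)%N -> bloch r' j = bloch rho j by move=> j hj; apply: ag; move: hj; lia.
    have := hB r' hp' ag5 => hb'.
    rewrite hs -(ag 5%N erefl) -(ag 6%N erefl); exact: L_le3' hb'.
  - move=> t ht; rewrite hs in ht.
    have [r' [hp' [e1 e2 e3 e4 [e5 e6 e7]]]] := @product R (bloch rho 2) (bloch rho 3) (bloch rho 4) (bloch rho 5) (bloch rho 6) t hA (L_ex3 ht).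
    exists r'; split; first exact: hp'.
    split; last exact: e7.
    move=> j /andP[j1 jn]; case: j j1 jn => [|[|[|[|[|[|[|[|j]]]]]]]] j1 jn; try (by exfalso; move: j1 jn; lia);
      rewrite ?e1 ?hb1 ?e2 ?e3 ?e4 ?e5 ?e6 ?e7; reflexivity.
rewrite /I_chi2_post.
do 15 (rewrite big_ltn; last by []). rewrite big_geq; last by [].
rewrite h2 h3 h4 h5 h6 h7.
rewrite (hpt 8%N erefl) (hpt 9%N erefl) (hpt 10%N erefl) (hpt 11%N erefl) (hpt 12%N erefl).
rewrite (hpt 13%N erefl) (hpt 14%N erefl) (hpt 15%N erefl) (hpt 16%N erefl).
move: hA hbs; rewrite /asum /bsum.
move: (bloch rho 2) (bloch rho 3) (bloch rho 4) (bloch rho 5) (bloch rho 6) (bloch rho 7).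
move: (bloch rho 8) (bloch rho 9) (bloch rho 10) (bloch rho 11) (bloch rho 12).
move: (bloch rho 13) (bloch rho 14) (bloch rho 15) (bloch rho 16).
move=> y13 y14 y15 y16 y8 y9 y10 y11 y12 x2 x3 x4 x5 x6 x7 hA0 hB0.
rewrite !Dchi2_0 !Dchi2_bb !add0r addr0.
exact: L_fin hA0 hB0.
Qed.
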